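(* Let $X$ be an irreducible affine variety over an algebraically closed field $\mathbb{K}$ of characteristic zero, and let $U\subseteq \mathbb{K}[X]$ be a linear subspace which is invariant under all regular automorphisms of $X$. Then $\partial(U)\subseteq U$ for every locally nilpotent derivation $\partial$ of $\mathbb{K}[X]$. Moreover, if $\mathbb{K}[X]=\bigoplus_{i\in\mathbb{Z}}\mathbb{K}[X]_i$ is a $\mathbb{Z}$-graded algebra, then $U=\bigoplus_{i\in\mathbb{Z}}\bigl(U\cap \mathbb{K}[X]_i\bigr)$.
   Context: A derivation $\partial$ of $\mathbb{K}[X]$ (a $\mathbb{K}$-linear map with $\partial(ab)=a\partial(b)+b\partial(a)$) is locally nilpotent if for every $a$ there is $n$ with $\partial^n(a)=0$. Automorphisms of $X$ act on $\mathbb{K}[X]$ by pullback. *)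

(* Defs.v *)
From HB Require Import structures.
From mathcomp Require Import all_boot all_order all_algebra.
Set Implicit Arguments. Unset Strict Implicit. Unset Printing Implicit Defensive.
Import GRing.Theory.
Local Open Scope ring_scope.

Definition subspace (K : fieldType) (A : lmodType K) (U : A -> Prop) : Prop :=
  U 0 /\ forall (k : K) (u v : A), U u -> U v -> U (k *: u + v).

Definition fin_gen_algebra (K : fieldType) (A : comAlgType K) : Prop :=
  exists s : seq A, forall P : A -> Prop,
    (forall x, x \in s -> P x) -> P 1 ->
    (forall (k : K) u v, P u -> P v -> P (k *: u + v)) ->
    (forall u v, P u -> P v -> P (u * v)) ->
    forall a, P a.

(* A has no zero divisors (1 != 0 holds since A is a nonzero ring). *)
Definition integral_domain (K : fieldType) (A : comAlgType K) : Prop :=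
  forall u v : A, u * v = 0 -> u = 0 \/ v = 0.

(* K-algebra automorphisms of A = K[X]; these are exactly the pullbacks
   of the regular automorphisms of the affine variety X. *)
Definition kalg_aut (K : fieldType) (A : comAlgType K) (phi : A -> A) : Prop :=
  (forall (k : K) u v, phi (k *: u + v) = k *: phi u + phi v) /\
  phi 1 = 1 /\
  (forall u v, phi (u * v) = phi u * phi v) /\
  bijective phi.

Definition derivation (K : fieldType) (A : comAlgType K) (d : A -> A) : Prop :=
  (forall (k : K) u v, d (k *: u + v) = k *: d u + d v) /\
  (forall u v, d (u * v) = u * d v + v * d u).

Definition locally_nilpotent (K : fieldType) (A : comAlgType K) (d : A -> A) : Prop :=
  forall a : A, exists n : nat, iter n d a = 0.

Definition Z_grading (K : fieldType) (A : comAlgType K) (G : int -> A -> Prop) : Prop :=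
  (forall i, subspace (G i)) /\
  (forall i j u v, G i u -> G j v -> G (i + j)%R (u * v)) /\
  (forall a : A, exists (s : seq int) (f : int -> A),
      uniq s /\ (forall i, G i (f i)) /\ a = \sum_(i <- s) f i) /\
  (forall (s : seq int) (f : int -> A), uniq s -> (forall i, G i (f i)) ->
      \sum_(i <- s) f i = 0 -> forall i, i \in s -> f i = 0).

(* Main.v *)
Require Import Defs.
From HB Require Import structures.
From mathcomp Require Import all_boot all_order all_algebra.
Import GRing.Theory.
Local Open Scope ring_scope.

From Stdlib Require Import ClassicalEpsilon.
Section Gen.
Variables (K : fieldType) (A : comAlgType K) (U : A -> Prop).
Hypothesis HU : subspace U.

Lemma sub0 : U 0. Proof. by case: HU. Qed.
Lemma subD u v : U u -> U v -> U (u + v).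
Proof. by move=> hu hv; have := HU.2 1 u v hu hv; rewrite scale1r. Qed.
Lemma subZ k u : U u -> U (k *: u).
Proof. by move=> hu; have := HU.2 k u 0 hu sub0; rewrite addr0. Qed.
Lemma subsum (I : Type) (r : seq I) (P : pred I) (F : I -> A) :
  (forall i, P i -> U (F i)) -> U (\sum_(i <- r | P i) F i).
Proof. move=> h; apply: (big_ind U) => //; [exact: sub0|exact: subD]. Qed.

Lemma mx_extract n (M : 'M[K]_n) (g : 'I_n -> A) : M \in unitmx ->
  (forall i, U (\sum_j M i j *: g j)) -> forall j, U (g j).
Proof.
move=> uM h j.
have -> : g j = \sum_i (invmx M) j i *: \sum_l M i l *: g l.
  under eq_bigr do rewrite scaler_sumr.
  rewrite exchange_big /=.
  under eq_bigr do (under eq_bigr do rewrite scalerA; rewrite -scaler_suml).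
  have e l : \sum_i invmx M j i * M i l = (j == l)%:R.
    by have := congr1 (fun N : 'M_n => N j l) (mulVmx uM); rewrite !mxE.

  under eq_bigr => l _ do rewrite e.
  rewrite (bigD1 j) //= eqxx scale1r big1 ?addr0 // => l; rewrite eq_sym => /negbTE ->.
  by rewrite scale0r.
by apply: subsum => i _; apply: subZ.
Qed.

Lemma vdm_unit n (x : 'I_n -> K) : injective x ->
  Vandermonde n (\row_j x j) \in unitmx.
Proof.
move=> ix; rewrite unitmxE det_Vandermonde unitfE.
apply/prodf_neq0 => i _; apply/prodf_neq0 => j ij.
rewrite !mxE subr_eq0; apply/eqP => /ix eij.
by move: ij; rewrite eij ltnn.
Qed.

Lemma vdm_extract1 n (x : 'I_n -> K) (g : 'I_n -> A) : injective x ->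
  (forall i, U (\sum_(k < n) (x i) ^+ k *: g k)) -> forall k, U (g k).
Proof.
move=> ix h; apply: (@mx_extract n (Vandermonde n (\row_j x j))^T).
  by rewrite unitmx_tr vdm_unit.
by move=> i; under eq_bigr do rewrite !mxE; apply: h.
Qed.

Lemma vdm_extract2 n (x : 'I_n -> K) (g : 'I_n -> A) : injective x ->
  (forall k : 'I_n, U (\sum_(i < n) (x i) ^+ k *: g i)) -> forall i, U (g i).
Proof.
move=> ix h; apply: (@mx_extract n (Vandermonde n (\row_j x j))).
  by rewrite vdm_unit.
by move=> i; under eq_bigr do rewrite !mxE; apply: h.
Qed.
End Gen.
Lemma bij_of_inj_surj (T : Type) (f : T -> T) :
  injective f -> (forall b, exists a, f a = b) -> bijective f.
Proof.
move=> fi fs.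
pose g b := proj1_sig (constructive_indefinite_description _ (fs b)).
have fg : cancel g f by move=> b; rewrite /g; case: constructive_indefinite_description.
by exists g => // a; apply: fi; rewrite fg.
Qed.

Lemma mult_surj_1 (T : pzRingType) (f : T -> T) :
  (forall u v, f (u * v) = f u * f v) -> (forall b, exists a, f a = b) -> f 1 = 1.
Proof. by move=> fM fs; case: (fs 1) => a fa; rewrite -fa -{2}(mul1r a) fM fa mulr1. Qed.

Section Exp.
Variables (K : fieldType) (A : comAlgType K) (d : A -> A).
Hypothesis Hd : derivation d.
Hypothesis Hn : locally_nilpotent d.
Hypothesis Hc : [pchar K] =i pred0.

Lemma nat_neq0 n : (n.+1%:R : K) != 0.
Proof. by move/pcharf0P: Hc => ->. Qed.

Lemma fact_neq0 n : (n`!%:R : K) != 0.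
Proof. by move/pcharf0P: Hc => ->; rewrite -lt0n fact_gt0. Qed.

Lemma dlin k u v : d (k *: u + v) = k *: d u + d v. Proof. exact: Hd.1. Qed.
Lemma dM u v : d (u * v) = u * d v + v * d u. Proof. exact: Hd.2. Qed.
Lemma d0 : d 0 = 0.
Proof.
have := dlin 1 0 0; rewrite !scale1r addr0 => h.
by apply: (addrI (d 0)); rewrite addr0 -h.
Qed.
Lemma dD u v : d (u + v) = d u + d v. Proof. by have := dlin 1 u v; rewrite !scale1r. Qed.
Lemma dZ k u : d (k *: u) = k *: d u. Proof. by rewrite -[_ *: u]addr0 dlin d0 addr0. Qed.

Lemma iterlin n k u v : iter n d (k *: u + v) = k *: iter n d u + iter n d v.
Proof. by elim: n => //= n ->; rewrite dlin. Qed.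
Lemma iter0 n : iter n d 0 = 0.
Proof. by elim: n => //= n ->; rewrite d0. Qed.
Lemma iterD' n u v : iter n d (u + v) = iter n d u + iter n d v.
Proof. by have := iterlin n 1 u v; rewrite !scale1r. Qed.
Lemma iterZ n k u : iter n d (k *: u) = k *: iter n d u.
Proof. by rewrite -[_ *: u]addr0 iterlin iter0 addr0. Qed.
Lemma iter_ge m n a : iter m d a = 0 -> (m <= n)%N -> iter n d a = 0.
Proof. by move=> h /subnK <-; rewrite iterD h iter0. Qed.

Definition N (a : A) : nat := proj1_sig (constructive_indefinite_description _ (Hn a)).
Lemma NP a : iter (N a) d a = 0.
Proof. by rewrite /N; case: constructive_indefinite_description. Qed.

Definition c (n : nat) (a : A) : A := (n`!%:R)^-1 *: iter n d a.
Definition T (a : A) : {poly A} := \poly_(n < N a) c n a.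

Lemma coefT a n : (T a)`_n = c n a.
Proof.
rewrite coef_poly; case: ltnP => // h.
by rewrite /c (@iter_ge _ _ _ (NP a) h) scaler0.
Qed.

Lemma c_lin n k u v : c n (k *: u + v) = k *: c n u + c n v.
Proof. by rewrite /c iterlin scalerDr !scalerA mulrC. Qed.

Lemma T_lin k u v : T (k *: u + v) = (k%:A)%:P * T u + T v.
Proof. by apply/polyP => n; rewrite coefD coefCM !coefT c_lin mulr_algl. Qed.
Lemma T_D u v : T (u + v) = T u + T v.
Proof. by have := T_lin 1 u v; rewrite scale1r scale1r mul1r. Qed.
Lemma T_N u : T (- u) = - T u.
Proof.
apply/polyP => n; rewrite coefN !coefT /c.
by rewrite -scaleN1r -[_ *: u]addr0 iterlin iter0 addr0 !scalerA mulrC -scalerA scaleN1r.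
Qed.

Lemma T_deriv a : (T a)^`() = T (d a).
Proof.
apply/polyP => n; rewrite coef_deriv !coefT /c iterSr -scaler_nat scalerA.
congr (_ *: _); rewrite factS natrM invfM mulrA mulfV ?mul1r //; exact: nat_neq0.
Qed.

Lemma coefT0 a : (T a)`_0 = a.
Proof. by rewrite coefT /c /= invr1 scale1r. Qed.

Lemma mulrn_inj (x : A) m : x *+ m.+1 = 0 -> x = 0.
Proof.
move=> h; rewrite -[x]scale1r -(mulVf (nat_neq0 m)) -scalerA scaler_nat h.
by rewrite scaler0.
Qed.

Lemma T_M a b : T (a * b) = T a * T b.
Proof.
apply/polyP => n; elim: n a b => [|n IH] a b.
  by rewrite coef0M !coefT0.
apply/eqP; rewrite -subr_eq0; apply/eqP.
set Q := fun a b => T (a * b) - T a * T b.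
have HQ : (Q a b)^`() = Q a (d b) + Q (d a) b.
  rewrite /Q derivB derivM !T_deriv dM T_D [d a * b]mulrC.
  by rewrite [T (d a) * T b]mulrC opprD [- _ + - _]addrC addrACA.
have : (Q a b)^`()`_n = 0.
  by rewrite HQ coefD /Q !coefB !IH !subrr addr0.
by rewrite coef_deriv /Q coefB => /mulrn_inj.
Qed.

Definition E (t : K) (a : A) : A := (T a).[t%:A].

Lemma E_sum t M a : iter M d a = 0 -> E t a = \sum_(k < M) t ^+ k *: c k a.
Proof.
move=> h; rewrite /E (@horner_coef_wide _ M).
  by apply: eq_bigr => k _; rewrite coefT exprZn expr1n mulr_algr.
by apply/leq_sizeP => j hj; rewrite coefT /c (@iter_ge _ _ _ h hj) scaler0.
Qed.

Lemma E_lin t k u v : E t (k *: u + v) = k *: E t u + E t v.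
Proof. by rewrite /E T_lin hornerD hornerCM mulr_algl. Qed.
Lemma E_D t u v : E t (u + v) = E t u + E t v.
Proof. by have := E_lin t 1 u v; rewrite !scale1r. Qed.
Lemma E_B t u v : E t (u - v) = E t u - E t v.
Proof. rewrite /E T_D T_N hornerD hornerN; reflexivity. Qed.
Lemma E_M t u v : E t (u * v) = E t u * E t v.
Proof. by rewrite /E T_M hornerM. Qed.
Lemma E0 t : E t 0 = 0.
Proof.
rewrite /E; have -> : T 0 = 0 by apply/polyP => n; rewrite coefT coef0 /c iter0 scaler0.
by rewrite horner0.
Qed.

Lemma E_const t b : d b = 0 -> E t b = b.
Proof.
move=> h; rewrite (@E_sum t 1 b) ?big_ord1 /c //= ?invr1 ?scale1r //.
Qed.

Lemma dsum (I : Type) (r : seq I) (F : I -> A) :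
  d (\sum_(i <- r) F i) = \sum_(i <- r) d (F i).
Proof. exact: (big_morph d dD d0). Qed.

Lemma dE t a : d (E t a) = E t (d a).
Proof.
have h1 : iter (N a) d (d a) = 0 by rewrite -iterSr iterS NP d0.
rewrite (@E_sum t _ _ (NP a)) (@E_sum t _ _ h1) dsum.
by apply: eq_bigr => k _; rewrite !dZ /c -iterSr iterS.
Qed.

Lemma iterE t n a : iter n d (E t a) = E t (iter n d a).
Proof. by elim: n => //= n ->; rewrite dE. Qed.

Lemma E_inj t : injective (E t).
Proof.
move=> a b eab; apply/eqP; rewrite -subr_eq0; apply/eqP.
have : E t (a - b) = 0 by rewrite E_B eab subrr.
move: (a - b) (NP (a - b)) => x; move: (N _) => n.
elim: n x => [|n IH] x //= hx ex.
apply: IH => //; by rewrite -(@E_const t _ hx) -iterE ex iter0.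
Qed.

Lemma E_surj t b : exists a, E t a = b.
Proof.
move: b (NP b) => b; move: (N _) => n.
elim: n b => [|n IH] b /= hb; first by exists 0; rewrite hb E0.
have hz : iter n d (E t b - b) = 0.
  rewrite -scaleN1r addrC iterlin iterE (@E_const t _ hb).
  by rewrite scaleN1r addrC subrr.
have [a ea] := IH _ hz.
by exists (b - a); rewrite E_B ea opprB addrC subrK.
Qed.

Lemma E_aut t : kalg_aut (E t).
Proof.
have sj := E_surj t.
split; first exact: E_lin.
split; first exact: mult_surj_1 (E_M t) sj.
split; first exact: E_M.
exact: bij_of_inj_surj (E_inj t) sj.
Qed.
End Exp.
Lemma sum_ext (V : zmodType) (s r : seq int) (F : int -> V) :
  uniq s -> uniq r -> {subset s <= r} ->
  \sum_(i <- r) (if i \in s then F i else 0) = \sum_(i <- s) F i.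
Proof.
move=> us ur sr; rewrite -big_mkcond -big_filter; apply: perm_big.
apply: uniq_perm; first exact: filter_uniq.
  done.
by move=> i; rewrite mem_filter; case: (boolP (i \in s)) => // /sr ->.
Qed.

Section Grad.
Variables (K : fieldType) (A : comAlgType K) (G : int -> A -> Prop).
Hypothesis HG : Z_grading G.

Lemma G0 i : G i 0. Proof. by case: (HG.1 i). Qed.
Lemma Glin {i} k {u v} : G i u -> G i v -> G i (k *: u + v). Proof. exact: (HG.1 i).2. Qed.
Lemma GZ {i} k {u} : G i u -> G i (k *: u).
Proof. by move=> h; have := Glin k h (G0 i); rewrite addr0. Qed.
Lemma GD {i u v} : G i u -> G i v -> G i (u + v).
Proof. by move=> h1 h2; have := Glin 1 h1 h2; rewrite scale1r. Qed.
Lemma GB {i u v} : G i u -> G i v -> G i (u - v).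
Proof. by move=> h1 h2; have := Glin (-1) h2 h1; rewrite scaleN1r addrC. Qed.

Definition ext (s : seq int) (f : int -> A) i := if i \in s then f i else 0.
Lemma Gext s {f} i : (forall i, G i (f i)) -> G i (ext s f i).
Proof. by rewrite /ext; case: ifP => // _ _; apply: G0. Qed.

Lemma W {s f s' f'} : uniq s -> (forall i, G i (f i)) -> uniq s' -> (forall i, G i (f' i)) ->
  \sum_(i <- s) f i = \sum_(i <- s') f' i -> forall i, ext s f i = ext s' f' i.
Proof.
move=> us hf us' hf' e i.
set r := undup (s ++ s').
have ur : uniq r := undup_uniq _.
have sr : {subset s <= r} by move=> j js; rewrite mem_undup mem_cat js.
have sr' : {subset s' <= r} by move=> j js; rewrite mem_undup mem_cat js orbT.
have := HG.2.2.2 r (fun j => ext s f j - ext s' f' j) ur.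
rewrite sumrB /ext !sum_ext // e subrr => /(_ (fun j => GB (Gext s j hf) (Gext s' j hf'))).
move=> /(_ erefl i); case: (boolP (i \in r)) => [ir /(_ isT) /eqP|ir _].
  by rewrite subr_eq0 => /eqP.
have -> : (i \in s) = false by apply: contraNF ir => /sr.
by have -> : (i \in s') = false by apply: contraNF ir => /sr'.
Qed.

Definition dec (a : A) : {sf : seq int * (int -> A) |
   uniq sf.1 /\ (forall i, G i (sf.2 i)) /\ a = \sum_(i <- sf.1) sf.2 i}.
Proof.
apply: constructive_indefinite_description.
by case: (HG.2.2.1 a) => s [f h]; exists (s, f).
Defined.

Definition phi (t : K) (a : A) : A :=
  \sum_(i <- (proj1_sig (dec a)).1) t ^ i *: (proj1_sig (dec a)).2 i.

Lemma phi_eq t {s f} : uniq s -> (forall i, G i (f i)) ->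
  phi t (\sum_(i <- s) f i) = \sum_(i <- s) t ^ i *: f i.
Proof.
move=> us hf; rewrite /phi; case: dec => [[s' f']] /= [us' [hf' e]].
set r := undup (s ++ s').
have ur : uniq r := undup_uniq _.
have sr : {subset s <= r} by move=> j js; rewrite mem_undup mem_cat js.
have sr' : {subset s' <= r} by move=> j js; rewrite mem_undup mem_cat js orbT.
rewrite -(@sum_ext _ _ _ (fun i => t ^ i *: f i) us ur sr) -(@sum_ext _ _ _ (fun i => t ^ i *: f' i) us' ur sr').
apply: eq_bigr => i _.
have := W us hf us' hf' e i; rewrite /ext.
case: (i \in s); case: (i \in s') => h; rewrite ?h // -?h ?scaler0 //; by rewrite h scaler0.
Qed.

Lemma phi_ext t {s f r} : uniq s -> (forall i, G i (f i)) -> uniq r -> {subset s <= r} ->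
  phi t (\sum_(i <- s) f i) = \sum_(i <- r) t ^ i *: ext s f i.
Proof.
move=> us hf ur sr.
rewrite -[X in phi t X](@sum_ext _ _ _ f us ur sr) phi_eq //.
by move=> i; apply: Gext.
Qed.

Lemma phi_lin t k a b : phi t (k *: a + b) = k *: phi t a + phi t b.
Proof.
case: (dec a) => [[sa fa]] /= [ua [ha ea]].
case: (dec b) => [[sb fb]] /= [ub [hb eb]].
set r := undup (sa ++ sb).
have ur : uniq r := undup_uniq _.
have sr : {subset sa <= r} by move=> j js; rewrite mem_undup mem_cat js.
have sr' : {subset sb <= r} by move=> j js; rewrite mem_undup mem_cat js orbT.
have e : k *: a + b = \sum_(i <- r) (k *: ext sa fa i + ext sb fb i).
  by rewrite big_split /= -scaler_sumr /ext !sum_ext // -ea -eb.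
rewrite e phi_eq //; last by move=> i; apply: Glin; apply: Gext.
rewrite ea eb !(phi_ext t ua ha ur sr) !(phi_ext t ub hb ur sr').
rewrite scaler_sumr -big_split /=; apply: eq_bigr => i _.
by rewrite scalerDr !scalerA mulrC.
Qed.

Lemma phi_D t a b : phi t (a + b) = phi t a + phi t b.
Proof. by have := phi_lin t 1 a b; rewrite !scale1r. Qed.
Lemma phi0 t : phi t 0 = 0.
Proof.
have := phi_D t 0 0; rewrite addr0 => h.
by apply: (addrI (phi t 0)); rewrite addr0 -h.
Qed.
Lemma phi_sum t (I : Type) (r : seq I) (F : I -> A) :
  phi t (\sum_(i <- r) F i) = \sum_(i <- r) phi t (F i).
Proof. exact: (big_morph (phi t) (phi_D t) (phi0 t)). Qed.

Lemma phi_hom t {j x} : G j x -> phi t x = t ^ j *: x.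
Proof.
move=> hx.
have := @phi_eq t [:: j] (fun i => if i == j then x else 0) erefl.
rewrite !big_seq1 eqxx; apply.
by move=> i; case: eqP => [->|]; [exact: hx|move=> _; exact: G0].
Qed.

Lemma phi_M t a b : t != 0 -> phi t (a * b) = phi t a * phi t b.
Proof.
move=> t0.
case: (dec a) => [[sa fa]] /= [ua [ha ea]].
case: (dec b) => [[sb fb]] /= [ub [hb eb]].
rewrite ea eb !phi_eq // mulr_suml phi_sum mulr_suml.
apply: eq_bigr => i _; rewrite mulr_sumr phi_sum mulr_sumr; apply: eq_bigr => j _.
rewrite (@phi_hom t (i + j)) ?expfzDr //.
  by rewrite -scalerAl -scalerAr scalerA.
exact: (HG.2.1 i j _ _ (ha i) (hb j)).
Qed.

Lemma phi_inv t a : t != 0 -> phi t^-1 (phi t a) = a.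
Proof.
move=> t0.
case: (dec a) => [[sa fa]] /= [ua [ha ea]].
rewrite ea (phi_eq t ua ha) (phi_eq t^-1 ua); last by move=> i; apply: GZ.
apply: eq_bigr => i _; rewrite scalerA -expfV mulVf ?scale1r //.
exact: expfz_neq0.
Qed.

Lemma phi_aut t : t != 0 -> kalg_aut (phi t).
Proof.
move=> t0.
have ti : t^-1 != 0 by rewrite invr_eq0.
have sj b : exists a, phi t a = b by exists (phi t^-1 b); rewrite -{1}(invrK t) phi_inv.
split; first exact: phi_lin.
split; first by apply: (@mult_surj_1 _ (phi t)) => // u v; apply: phi_M.
split; first by move=> u v; apply: phi_M.
by exists (phi t^-1) => a; [apply: phi_inv|rewrite -{1}(invrK t) phi_inv].
Qed.
End Grad.

Lemma natK_inj (K : fieldType) : [pchar K] =i pred0 -> injective (fun n : nat => (n%:R : K)).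
Proof.
move=> hc.
have key a b : (a < b)%N -> (a%:R : K) != b%:R.
  move=> ab; rewrite eq_sym -subr_eq0 -natrB ?(ltnW ab) //.
  by rewrite ((pcharf0P _).1 hc) subn_eq0 -ltnNge ab.
move=> m n /= e; case: (ltngtP m n) => // h.
  by move: (key _ _ h); rewrite e eqxx.
by move: (key _ _ h); rewrite e eqxx.
Qed.

Lemma two_inj (K : fieldType) : [pchar K] =i pred0 -> forall i j : int,
  (2 : K) ^ i = 2 ^ j -> i = j.
Proof.
move=> hc.
have two0 : (2 : K) != 0 by move/pcharf0P: hc => ->.
have W i j : (i <= j)%R -> (2 : K) ^ i = 2 ^ j -> i = j.
  move=> ij.
  have [n ->] : exists n : nat, j = i + n%:Z.
    exists `|j - i|%N; rewrite gez0_abs; last by rewrite Num.Theory.subr_ge0.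
    by rewrite addrCA subrr addr0.
  rewrite expfzDr // => e.
  have : (2 : K) ^+ n = 1.
    by apply: (mulfI (expfz_neq0 i two0)); rewrite mulr1 exprnP -e.
  rewrite -natrX -[1]/(1%:R) => /natK_inj -/(_ hc).
  case: n {e} => [|n]; first by rewrite addr0.
  by rewrite expnS => /eqP; rewrite muln_eq1.
move=> i j e; case/orP: (Order.TotalTheory.le_total i j) => h.
  exact: W.
by apply/esym/W.
Qed.

Theorem lemma3 (K : closedFieldType) (A : comAlgType K) (U : A -> Prop) :
  [pchar K] =i pred0 ->
  fin_gen_algebra A -> integral_domain A ->
  subspace U ->
  (forall phi : A -> A, kalg_aut phi -> forall u, U u -> U (phi u)) ->
  (forall d : A -> A, derivation d -> locally_nilpotent d ->
     forall u, U u -> U (d u)) /\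
  (forall G : int -> A -> Prop, Z_grading G ->
     forall u, U u -> forall (s : seq int) (f : int -> A),
       uniq s -> (forall i, G i (f i)) -> u = \sum_(i <- s) f i ->
       forall i, i \in s -> U (f i)).
Proof.
move=> Hc _ _ HU Haut; split.
  move=> d Hd Hn u hu.
  have [M hM] := Hn u.
  have hM2 : iter M.+2 d u = 0 by apply: (@iter_ge K A d Hd M M.+2 u hM); rewrite leqW.
  have ix : injective (fun j : 'I_M.+2 => (nat_of_ord j)%:R : K).
    by move=> j j' /natK_inj -/(_ Hc) /ord_inj.
  have := @vdm_extract1 K A U HU M.+2 _ (fun k => c K A d k u) ix.
  have h1 : (1 < M.+2)%N by [].
  move=> /(_ _ (Ordinal h1)) /=; rewrite /c /= invr1 scale1r; apply.
  move=> i; rewrite -(@E_sum K A d Hd Hn _ _ _ hM2); apply: Haut => //.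
  exact: (@E_aut K A d Hd Hn Hc).
move=> G HG u hu s f us hf eu i iin.
have two0 : (2 : K) != 0 by move/pcharf0P: Hc => ->.
pose m := size s.
pose x (l : 'I_m) := (2 : K) ^ (nth 0 s l).
pose g (l : 'I_m) := f (nth 0 s l).
have ix : injective x.
  move=> l l' /two_inj -/(_ Hc) /eqP; rewrite nth_uniq // => /eqP; exact: ord_inj.
have e y (j : int) (k : nat) : (y ^+ k) ^ j = (y ^ j) ^+ k :> K.
  by rewrite !exprnP exprzAC.
have := @vdm_extract2 K A U HU m x g ix.
have im : (index i s < m)%N by rewrite index_mem.
move=> /(_ _ (Ordinal im)); rewrite /g /= nth_index //; apply.
move=> k; have := Haut _ (phi_aut K A G HG _ (expf_neq0 k two0)) u hu.
rewrite eu phi_eq // (big_nth 0) big_mkord.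
suff -> : \sum_(i0 < m) x i0 ^+ k *: f s`_i0 = \sum_(i0 < size s) 2 ^+ k ^ s`_i0 *: f s`_i0 by [].
by apply: eq_bigr => l _; rewrite e.
Qed.
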